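(* Let $q\ge1$ and assume Hypothesis (H$_q$). Then for every $\theta>0$, $$\Big|f\Big(\frac{m(a+b)}{2}\Big)-\frac{\Gamma(\theta+1)2^{\theta-1}}{m^\theta(b-a)^\theta}\Big[J^\theta_{(\frac{m(a+b)}{2})^-}f(ma)+J^\theta_{(\frac{m(a+b)}{2})^+}f(mb)\Big]\Big|$$ $$\le\frac{m(b-a)}{4}\cdot\frac{1}{\theta+1}\Big(\frac{1}{\alpha+\theta+1}\Big)^{\frac1q}\Big\{\Big[(\theta+1)\Big|f'\Big(\frac{m(a+b)}2\Big)\Big|^q+\alpha m|f'(a)|^q\Big]^{\frac1q}+\Big[(\theta+1)\Big|f'\Big(\frac{m(a+b)}2\Big)\Big|^q+\alpha m|f'(b)|^q\Big]^{\frac1q}\Big\}.$$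
   Context: Let $\Gamma$ denote Euler's Gamma function. For $\theta>0$, $c=\frac{m(a+b)}{2}$: $J^\theta_{c^-}f(ma)=\frac{1}{\Gamma(\theta)}\int_{ma}^{c}(s-ma)^{\theta-1}f(s)\,ds$ and $J^\theta_{c^+}f(mb)=\frac{1}{\Gamma(\theta)}\int_{c}^{mb}(mb-s)^{\theta-1}f(s)\,ds$. $(\alpha,m)$-convexity: for $(\alpha,m)\in[0,1]\times(0,1]$ and an interval $K\subseteq[0,\infty)$, a function $g:K\to\mathbb{R}$ is $(\alpha,m)$-convex on $K$ if $g(tX+m(1-t)Y)\le t^\alpha g(X)+m(1-t^\alpha)g(Y)$ for all $X,Y\in K$ and $t\in[0,1]$ with $tX+m(1-t)Y\in K$ (convention $0^0=1$). Hypothesis (H$_q$): $I\subseteq[0,\infty)$ is an interval, $f:I\to\mathbb{R}$ is differentiable on the interior $I^\circ$, $m\in(0,1]$, $\alpha\in[0,1]$, $a<b$ with $ma,b\in I^\circ$, $f'$ is Lebesgue integrable on $[ma,mb]$, and $|f'|^q$ is $(\alpha,m)$-convex on $[ma,b]$. *)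

(* Defs.v *)
From Stdlib Require Import Reals Lra ClassicalEpsilon.
Open Scope R_scope.

(* Real power with the conventions x^0 = 1 (incl. 0^0 = 1) and 0^y = 0 for y <> 0;
   for x > 0 it is Rpower x y = exp (y ln x). Only used with x >= 0. *)
Definition rpow (x y : R) : R :=
  if Req_EM_T x 0 then (if Req_EM_T y 0 then 1 else 0) else Rpower x y.

(* Improper Riemann integral over the open interval (lo, hi), lo < hi:
   the limit of int_x^y g as x -> lo+ and y -> hi-. *)
Definition improper_int_is (g : R -> R) (lo hi v : R) : Prop :=
  (forall x y, lo < x -> x <= y -> y < hi -> inhabited (Riemann_integrable g x y)) /\
  (forall eps, 0 < eps -> exists delta, 0 < delta /\
     forall x y (pr : Riemann_integrable g x y),
       lo < x -> x < lo + delta -> x <= y -> hi - delta < y -> y < hi ->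
       Rabs (RiemannInt pr - v) < eps).

Definition improper_int (g : R -> R) (lo hi : R) : R :=
  epsilon (inhabits 0) (fun v => improper_int_is g lo hi v).

Definition improper_int_0_infty_is (g : R -> R) (v : R) : Prop :=
  (forall x y, 0 < x -> x <= y -> inhabited (Riemann_integrable g x y)) /\
  (forall eps, 0 < eps -> exists delta M, 0 < delta /\
     forall x y (pr : Riemann_integrable g x y),
       0 < x -> x < delta -> x <= y -> M < y ->
       Rabs (RiemannInt pr - v) < eps).

Definition Gamma (t : R) : R :=
  epsilon (inhabits 0)
    (fun v => improper_int_0_infty_is (fun s => Rpower s (t - 1) * exp (- s)) v).

(* Riemann--Liouville fractional integrals, with c the upper/lower endpoint:
   J^th_{c-} f(x) = 1/Gamma(th) int_x^c (s-x)^(th-1) f(s) ds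
   J^th_{c+} f(y) = 1/Gamma(th) int_c^y (y-s)^(th-1) f(s) ds *)
Definition J_left (th : R) (c : R) (f : R -> R) (x : R) : R :=
  / Gamma th * improper_int (fun s => Rpower (s - x) (th - 1) * f s) x c.

Definition J_right (th : R) (c : R) (f : R -> R) (y : R) : R :=
  / Gamma th * improper_int (fun s => Rpower (y - s) (th - 1) * f s) c y.

Definition is_interval (I : R -> Prop) : Prop :=
  forall x y z, I x -> I z -> x <= y <= z -> I y.

(* (alpha,m)-convexity on K, with t^alpha := rpow t alpha (so 0^0 = 1). *)
Definition alpha_m_convex (alpha m : R) (K : R -> Prop) (g : R -> R) : Prop :=
  forall X Y t, K X -> K Y -> 0 <= t <= 1 -> K (t * X + m * (1 - t) * Y) ->
    g (t * X + m * (1 - t) * Y) <= rpow t alpha * g X + m * (1 - rpow t alpha) * g Y.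

(* Main.v *)
Require Import Defs.
From Stdlib Require Import Reals Lra ClassicalEpsilon Classical FunctionalExtensionality.
From Coquelicot Require Import Coquelicot.
Open Scope R_scope.

Lemma Rpower_gt0 x y : 0 < Rpower x y.
Proof. unfold Rpower; apply exp_pos. Qed.

Lemma rpow_pos x y : 0 < x -> rpow x y = Rpower x y.
Proof. intros H; unfold rpow; destruct (Req_EM_T x 0); [lra|auto]. Qed.

Lemma rpow_0l y : y <> 0 -> rpow 0 y = 0.
Proof. intros H; unfold rpow; destruct (Req_EM_T 0 0); [|lra]. destruct (Req_EM_T y 0); [lra|auto]. Qed.

Lemma deriv_pw (lo p s : R) : lo < s ->
  is_derive (fun s => Rpower (s - lo) p) s (p * Rpower (s-lo) (p-1)).
Proof.
  intros H.
  assert (H1 : is_derive (fun x => Rpower x p) (s - lo) (p * Rpower (s-lo) (p-1))).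
  { apply is_derive_Reals. apply derivable_pt_lim_power. lra. }
  assert (H2 : is_derive (fun s => s - lo) s 1).
  { auto_derive; auto; ring. }
  pose proof (is_derive_comp (fun x => Rpower x p) (fun s => s - lo) s _ _ H1 H2) as H3.
  simpl in H3. replace (p * Rpower (s - lo) (p - 1)) with (scal 1 (p * Rpower (s - lo) (p - 1))).
  exact H3. unfold scal; simpl; unfold mult; simpl; ring.
Qed.

Lemma cont_pw (lo p s : R) : lo < s -> continuous (fun s => Rpower (s - lo) p) s.
Proof. intros H. apply (ex_derive_continuous (K:=R_AbsRing) (V:=R_NormedModule)). eexists; apply deriv_pw; auto. Qed.

Lemma mono_le (k dk : R -> R) (u v : R) : u <= v ->
  (forall s, u <= s <= v -> is_derive k s (dk s)) ->
  (forall s, u <= s <= v -> 0 <= dk s) -> k u <= k v.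
Proof.
  intros Huv Hd Hp.
  destruct (MVT_gen k u v dk) as [c [Hc Heq]].
  - intros x Hx. rewrite Rmin_left in Hx by lra. rewrite Rmax_right in Hx by lra.
    apply Hd; lra.
  - intros x Hx. rewrite Rmin_left in Hx by lra. rewrite Rmax_right in Hx by lra.
    apply continuity_pt_filterlim. apply (ex_derive_continuous (K:=R_AbsRing) (V:=R_NormedModule)). eexists; apply Hd; lra.
  - rewrite Rmin_left in Hc by lra. rewrite Rmax_right in Hc by lra.
    assert (0 <= dk c * (v - u)). { apply Rmult_le_pos; [apply Hp; lra | lra]. }
    lra.
Qed.

Lemma ln_le_lin s k : 0 < s -> 0 < k -> ln s <= s / k + ln k - 1.
Proof.
  intros Hs Hk. pose proof (exp_ineq1_le (ln (s / k))) as H.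
  rewrite exp_ln in H by (apply Rdiv_lt_0_compat; auto).
  rewrite ln_div in H by auto. lra.
Qed.

Lemma eq_eps x y : (forall eps, 0 < eps -> Rabs (x - y) < eps) -> x = y.
Proof.
  intros H. destruct (Req_dec x y) as [e|n]; auto.
  assert (0 < Rabs (x - y)) by (apply Rabs_pos_lt; lra).
  specialize (H _ H0). lra.
Qed.

Lemma improper_unique g lo hi v : lo < hi -> improper_int_is g lo hi v -> improper_int g lo hi = v.
Proof.
  intros Hlh Hv. unfold improper_int.
  assert (Hv' : improper_int_is g lo hi (epsilon (inhabits 0) (fun v => improper_int_is g lo hi v))).
  { apply epsilon_spec. exists v; auto. }
  set (v' := epsilon _ _) in *. apply eq_eps. intros eps Heps.
  destruct Hv as [Hi Hl]. destruct Hv' as [_ Hl'].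
  destruct (Hl (eps/2)) as [d1 [Hd1 H1]]; [lra|].
  destruct (Hl' (eps/2)) as [d2 [Hd2 H2]]; [lra|].
  set (d := Rmin (Rmin d1 d2) ((hi - lo)/2)).
  assert (Hd : 0 < d). { unfold d. apply Rmin_pos; [apply Rmin_pos|]; lra. }
  assert (Hdd1 : d <= d1). { unfold d. eapply Rle_trans; [apply Rmin_l|apply Rmin_l]. }
  assert (Hdd2 : d <= d2). { unfold d. eapply Rle_trans; [apply Rmin_l|apply Rmin_r]. }
  assert (Hdd3 : d <= (hi-lo)/2). { unfold d. apply Rmin_r. }
  destruct (Hi (lo + d/2) (hi - d/2)) as [pr]; try lra.
  specialize (H1 _ _ pr). specialize (H2 _ _ pr).
  assert (A1 : Rabs (RiemannInt pr - v) < eps/2) by (apply H1; lra).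
  assert (A2 : Rabs (RiemannInt pr - v') < eps/2) by (apply H2; lra).
  apply Rabs_def2 in A1. apply Rabs_def2 in A2. apply Rabs_def1; lra.
Qed.

Lemma ex_RInt_refl1 (g : R -> R) x y : ex_RInt g x y -> ex_RInt (fun u => g (- u)) (- y) (- x).
Proof.
  intros H.
  assert (E : ex_RInt g ((-1) * (-y) + 0) ((-1) * (-x) + 0)).
  { replace ((-1) * (-y) + 0) with y by ring. replace ((-1) * (-x) + 0) with x by ring.
    apply ex_RInt_swap; auto. }
  apply ex_RInt_comp_lin in E. apply (ex_RInt_scal _ _ _ (-1)) in E.
  eapply ex_RInt_ext; [|exact E]. intros t _. unfold scal; simpl; unfold mult; simpl.
  replace (-1*t+0) with (-t) by ring. ring.
Qed.

Lemma ex_RInt_refl2 (g : R -> R) x y : ex_RInt (fun u => g (- u)) (- y) (- x) -> ex_RInt g x y.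
Proof.
  intros H. apply ex_RInt_refl1 in H. eapply ex_RInt_ext; [|rewrite !Ropp_involutive in H; exact H].
  intros t _. simpl. rewrite Ropp_involutive; auto.
Qed.

Lemma RInt_refl (g : R -> R) x y : ex_RInt g x y ->
  RInt (fun u => g (- u)) (- y) (- x) = RInt g x y.
Proof.
  intros H.
  assert (E : ex_RInt g ((-1) * (-y) + 0) ((-1) * (-x) + 0)).
  { replace ((-1) * (-y) + 0) with y by ring. replace ((-1) * (-x) + 0) with x by ring.
    apply ex_RInt_swap; auto. }
  pose proof (RInt_comp_lin g (-1) 0 (-y) (-x) E) as HH.
  replace ((-1) * (-y) + 0) with y in HH by ring. replace ((-1) * (-x) + 0) with x in HH by ring.
  rewrite <- (opp_RInt_swap g x y H) in HH.
  assert (HH2 : RInt (fun u => scal (-1) (g (-1 * u + 0))) (- y) (- x) = - RInt (fun u => g (- u)) (-y) (-x)).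
  { transitivity (RInt (fun u => opp (g (-u))) (-y) (-x)).
    - apply RInt_ext. intros t _. unfold scal, opp; simpl; unfold mult; simpl. replace (-1*t+0) with (-t) by ring. ring.
    - rewrite (RInt_opp (V:=R_CompleteNormedModule)). reflexivity. apply ex_RInt_refl1; auto. }
  assert (HH3 := eq_trans (eq_sym HH2) HH). unfold opp in HH3; simpl in HH3. lra.
Qed.

Lemma improper_refl g lo hi v : improper_int_is (fun u => g (- u)) (- hi) (- lo) v -> improper_int_is g lo hi v.
Proof.
  intros [Hi Hl]. split.
  - intros x y H1 H2 H3. destruct (Hi (-y) (-x)) as [pr]; try lra.
    constructor. apply ex_RInt_Reals_0. apply ex_RInt_refl2. apply ex_RInt_Reals_1; auto.
  - intros eps Heps. destruct (Hl eps Heps) as [d [Hd H]]. exists d; split; auto.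
    intros x y pr H1 H2 H3 H4 H5.
    destruct (Hi (-y) (-x)) as [pr']; try lra.
    specialize (H _ _ pr'). rewrite <- RInt_Reals in H. rewrite <- RInt_Reals.
    rewrite RInt_refl in H. apply H; lra. apply ex_RInt_Reals_1; auto.
Qed.

Lemma cont_eps (f : R -> R) x : continuous f x ->
  forall eps, 0 < eps -> exists d, 0 < d /\ forall y, Rabs (y - x) < d -> Rabs (f y - f x) < eps.
Proof.
  intros Hc eps He.
  pose proof (proj1 (filterlim_locally f (f x)) Hc (mkposreal eps He)) as H.
  destruct H as [d Hd]. exists d. split. apply cond_pos.
  intros y Hy. apply (Hd y). exact Hy.
Qed.

Lemma eps_cont (f : R -> R) x : 
  (forall eps, 0 < eps -> exists d, 0 < d /\ forall y, Rabs (y - x) < d -> Rabs (f y - f x) < eps) ->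
  continuous f x.
Proof.
  intros H. apply filterlim_locally. intros [eps He].
  destruct (H eps He) as [d [Hd Hy]]. exists (mkposreal d Hd). intros y Hb. apply Hy. exact Hb.
Qed.

Lemma cont_Rpow p z : 0 < z -> continuous (fun z => Rpower z p) z.
Proof.
  intros H. apply (ex_derive_continuous (K:=R_AbsRing) (V:=R_NormedModule)).
  exists (p * Rpower z (p-1)). apply is_derive_Reals. apply derivable_pt_lim_power. auto.
Qed.

Definition Pf (th w : R) := if Rle_dec w 0 then 0 else Rpower (th * w) (/ th).

Lemma Pf_cont th w : 0 < th -> 0 <= w -> continuous (Pf th) w.
Proof.
  intros Hth Hw. destruct (Req_dec w 0) as [->|Hw0].
  - apply eps_cont. intros eps He. exists (/ th * Rpower eps th). split.
    { apply Rmult_lt_0_compat. apply Rinv_0_lt_compat; auto. apply Rpower_gt0. }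
    intros y Hy. unfold Pf. destruct (Rle_dec 0 0); [|lra].
    destruct (Rle_dec y 0). rewrite Rminus_0_r, Rabs_R0; auto.
    repeat rewrite Rminus_0_r in *. rewrite Rabs_right in Hy by lra.
    rewrite Rabs_right by (left; apply Rpower_gt0).
    replace eps with (Rpower (Rpower eps th) (/ th)).
    apply Rlt_Rpower_l. apply Rinv_0_lt_compat; auto. split. nra.
    apply (Rmult_lt_compat_l th) in Hy; auto. rewrite <- Rmult_assoc, Rinv_r, Rmult_1_l in Hy; lra.
    rewrite Rpower_mult, Rinv_r, Rpower_1; lra.
  - assert (Hw' : 0 < w) by lra.
    apply continuity_pt_filterlim.
    apply continuity_pt_locally_ext with (f := fun y => Rpower (th * y) (/ th)) (a := w); auto.
    + intros y Hy. unfold Pf. destruct (Rle_dec y 0); auto.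
      unfold Rdist in Hy. apply Rabs_def2 in Hy. lra.
    + apply continuity_pt_filterlim.
      apply (continuous_comp (fun y => th * y) (fun z => Rpower z (/ th))).
      * apply (ex_derive_continuous (K:=R_AbsRing) (V:=R_NormedModule)). auto_derive. auto.
      * apply cont_Rpow. nra.
Qed.

Lemma lim_le A B C eta0 : 0 < eta0 -> 0 <= C ->
  (forall eta, 0 < eta < eta0 -> A <= B + C * eta) -> A <= B.
Proof.
  intros H0 HC H. destruct (Rle_dec A B) as [r|n]; auto.
  set (e := Rmin (eta0/2) ((A - B)/(2*(C+1)))).
  assert (He : 0 < e). { unfold e; apply Rmin_pos; [lra|]. apply Rdiv_lt_0_compat; lra. }
  assert (He1 : e <= eta0/2) by apply Rmin_l.
  assert (He2 : e <= (A - B)/(2*(C+1))) by apply Rmin_r.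
  specialize (H e ltac:(lra)).
  assert (C * e <= (C+1) * ((A-B)/(2*(C+1)))).
  { apply Rmult_le_compat; lra. }
  replace ((C+1) * ((A-B)/(2*(C+1)))) with ((A-B)/2) in H1 by (field; lra). lra.
Qed.

Lemma W_deriv lo th s : 0 < th -> lo < s ->
  is_derive (fun s => / th * Rpower (s - lo) th) s (Rpower (s - lo) (th - 1)).
Proof.
  intros Hth Hs. replace (Rpower (s - lo) (th - 1)) with (/ th * (th * Rpower (s - lo) (th - 1))).
  apply is_derive_scal. apply deriv_pw; auto. field; lra.
Qed.

Lemma W_lt lo th x y : 0 < th -> lo < x < y -> / th * Rpower (x - lo) th < / th * Rpower (y - lo) th.
Proof.
  intros Hth H. apply Rmult_lt_compat_l. apply Rinv_0_lt_compat; auto.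
  apply Rlt_Rpower_l; lra.
Qed.

Lemma P_W lo th s : 0 < th -> lo < s -> Pf th (/ th * Rpower (s - lo) th) = s - lo.
Proof.
  intros Hth Hs. unfold Pf. destruct (Rle_dec _ 0) as [r|n].
  - exfalso. assert (0 < / th * Rpower (s - lo) th).
    { apply Rmult_lt_0_compat. apply Rinv_0_lt_compat; auto. apply Rpower_gt0. } lra.
  - rewrite <- Rmult_assoc, Rinv_r, Rmult_1_l by lra.
    rewrite Rpower_mult, Rinv_r, Rpower_1; lra.
Qed.

Lemma Pf_range th w : 0 < th -> 0 <= w -> 0 <= Pf th w.
Proof. intros. unfold Pf. destruct (Rle_dec w 0); [lra|]. left; apply Rpower_gt0. Qed.

Lemma Pf_le th w L : 0 < th -> 0 < L -> w <= / th * Rpower L th -> Pf th w <= L.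
Proof.
  intros Hth HL Hw. unfold Pf. destruct (Rle_dec w 0); [lra|].
  replace L with (Rpower (Rpower L th) (/ th)) by (rewrite Rpower_mult, Rinv_r, Rpower_1; lra).
  apply Rle_Rpower_l. left; apply Rinv_0_lt_compat; auto. split. nra.
  apply (Rmult_le_compat_l th) in Hw; [|lra]. rewrite <- Rmult_assoc, Rinv_r, Rmult_1_l in Hw; lra.
Qed.

Section Gen.
Variables (h h' : R -> R) (lo hi th : R).
Hypothesis Hlh : lo < hi.
Hypothesis Hth : 0 < th.
Hypothesis Hd : forall s, lo <= s <= hi -> is_derive h s (h' s).

Let W s := / th * Rpower (s - lo) th.
Let dW s := Rpower (s - lo) (th - 1).
Let F w := h (lo + Pf th w).
Let g s := Rpower (s - lo) (th - 1) * h s.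

Lemma h_cont s : lo <= s <= hi -> continuous h s.
Proof. intros H. apply (ex_derive_continuous (K:=R_AbsRing) (V:=R_NormedModule)). eexists; apply Hd; auto. Qed.

Lemma F_cont w : 0 <= w <= W hi -> continuous F w.
Proof.
  intros Hw. unfold F.
  apply (continuous_comp (Pf th) (fun z => h (lo + z))).
  - apply Pf_cont; lra.
  - apply (continuous_comp (fun z => lo + z) h).
    + apply (ex_derive_continuous (K:=R_AbsRing) (V:=R_NormedModule)). auto_derive; auto.
    + apply h_cont. pose proof (Pf_range th w Hth (proj1 Hw)).
      pose proof (Pf_le th w (hi - lo) Hth ltac:(lra) (proj2 Hw)). lra.
Qed.

Lemma W_pos s : lo < s -> 0 < W s.
Proof. intros. unfold W. apply Rmult_lt_0_compat. apply Rinv_0_lt_compat; auto. apply Rpower_gt0. Qed.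

Lemma W_le s : lo < s <= hi -> W s <= W hi.
Proof. intros H. destruct (Req_dec s hi) as [->|n]. lra. left. apply W_lt; lra. Qed.

Lemma comp_eq x y : lo < x <= y -> y <= hi -> ex_RInt g x y /\ RInt g x y = RInt F (W x) (W y).
Proof.
  intros H1 H2.
  assert (Hc : forall s, Rmin x y <= s <= Rmax x y -> lo < s <= hi).
  { intros s Hs. rewrite Rmin_left in Hs by lra. rewrite Rmax_right in Hs by lra. lra. }
  split.
  - apply (ex_RInt_continuous (V:=R_CompleteNormedModule)). intros s Hs. specialize (Hc s Hs).
    apply (continuous_mult (fun s => Rpower (s - lo) (th - 1)) h).
    apply cont_pw; lra. apply h_cont; lra.
  - rewrite <- (RInt_comp (V:=R_CompleteNormedModule) F W dW).
    + apply RInt_ext. intros s Hs. rewrite Rmin_left in Hs by lra. rewrite Rmax_right in Hs by lra.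
      unfold g, F, dW, W. rewrite P_W by lra. unfold scal; simpl; unfold mult; simpl.
      replace (lo + (s - lo)) with s by ring. reflexivity.
    + intros s Hs. specialize (Hc s Hs). apply F_cont. split. left; apply W_pos; lra. apply W_le; lra.
    + intros s Hs. specialize (Hc s Hs). split. apply W_deriv; lra. apply cont_pw; lra.
Qed.


Lemma h_bound : exists M, 0 <= M /\ forall s, lo <= s <= hi -> Rabs (h s) <= M.
Proof.
  destruct (continuity_ab_maj (fun s => Rabs (h s)) lo hi) as [Mx [H1 H2]]. lra.
  - intros c Hc. apply continuity_pt_filterlim. apply continuous_Rabs_comp. apply h_cont; auto.
  - exists (Rabs (h Mx)). split. apply Rabs_pos. auto.
Qed.

Lemma exF p q : 0 <= p <= W hi -> 0 <= q <= W hi -> ex_RInt F p q.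
Proof.
  intros Hp Hq. apply (ex_RInt_continuous (V:=R_CompleteNormedModule)). intros z Hz.
  apply F_cont. split.
  - eapply Rle_trans; [|apply Hz]. apply Rmin_glb; lra.
  - eapply Rle_trans; [apply Hz|]. apply Rmax_lub; lra.
Qed.

Lemma F_small M p q : (forall s, lo <= s <= hi -> Rabs (h s) <= M) ->
  0 <= p <= q -> q <= W hi -> Rabs (RInt F p q) <= (q - p) * M.
Proof.
  intros HM Hp Hq. apply abs_RInt_le_const. lra. apply exF; lra.
  intros t Ht. unfold F. apply HM.
  pose proof (Pf_range th t Hth ltac:(lra)).
  pose proof (Pf_le th t (hi - lo) Hth ltac:(lra) ltac:(unfold W in Hq; lra)). lra.
Qed.

Lemma chasles3 a b c d : 0 <= a <= W hi -> 0 <= b <= W hi -> 0 <= c <= W hi -> 0 <= d <= W hi ->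
  RInt F a d = RInt F a b + RInt F b c + RInt F c d.
Proof.
  intros. pose proof (RInt_Chasles (V:=R_CompleteNormedModule) F a b c (exF a b H H0) (exF b c H0 H1)).
  pose proof (RInt_Chasles (V:=R_CompleteNormedModule) F a c d (exF a c H H1) (exF c d H1 H2)).
  simpl in *. unfold plus in *; simpl in *. lra.
Qed.

Lemma W_cont : continuous W hi.
Proof. apply (ex_derive_continuous (K:=R_AbsRing) (V:=R_NormedModule)). eexists; apply W_deriv; lra. Qed.

Lemma W_lo e : 0 < e -> W (lo + Rpower (th * e) (/ th)) = e.
Proof.
  intros He. unfold W. replace (lo + Rpower (th * e) (/ th) - lo) with (Rpower (th * e) (/ th)) by ring.
  rewrite Rpower_mult, Rinv_l, Rpower_1 by nra. field; lra.
Qed.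

Lemma improper_is : improper_int_is g lo hi (RInt F 0 (W hi)).
Proof.
  assert (HW0 : 0 < W hi) by (apply W_pos; lra).
  destruct h_bound as [M [HM0 HM]].
  split.
  - intros x y H1 H2 H3. constructor. apply ex_RInt_Reals_0. apply comp_eq; lra.
  - intros eps Heps. set (e := eps / (2 * (M + 1))).
    assert (He : 0 < e) by (unfold e; apply Rdiv_lt_0_compat; lra).
    destruct (cont_eps W hi W_cont e He) as [d2 [Hd2 Hc2]].
    set (d1 := Rpower (th * e) (/ th)).
    assert (Hd1 : 0 < d1) by apply Rpower_gt0.
    exists (Rmin d1 d2). split. apply Rmin_pos; auto.
    intros x y pr Hx1 Hx2 Hxy Hy1 Hy2.
    assert (Hm1 := Rmin_l d1 d2). assert (Hm2 := Rmin_r d1 d2).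
    rewrite <- RInt_Reals. destruct (comp_eq x y ltac:(lra) ltac:(lra)) as [_ ->].
    assert (HWx : W x < e). { rewrite <- (W_lo e He). apply W_lt; auto. fold d1. lra. }
    assert (HWy : Rabs (W y - W hi) < e). { apply Hc2. rewrite Rabs_left; lra. }
    assert (Wx0 : 0 < W x) by (apply W_pos; lra).
    assert (Wxy : W x <= W y). { destruct (Req_dec x y) as [->|n]. lra. left; apply W_lt; lra. }
    assert (Wyh : W y <= W hi) by (apply W_le; lra).
    rewrite (chasles3 0 (W x) (W y) (W hi)) by lra.
    pose proof (F_small M 0 (W x) HM ltac:(lra) ltac:(lra)).
    pose proof (F_small M (W y) (W hi) HM ltac:(lra) ltac:(lra)).
    apply Rabs_def2 in HWy.
    assert (HH : W x * M + (W hi - W y) * M <= 2 * e * M) by nra.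
    assert (HH2 : 2 * e * M < eps).
    { unfold e. replace (2 * (eps / (2 * (M + 1))) * M) with (eps * (M / (M+1))) by (field; lra).
      assert (M / (M+1) < 1) by (apply Rmult_lt_reg_r with (M+1); [lra|]; field_simplify; lra). nra. }
    replace (RInt F (W x) (W y) - (RInt F 0 (W x) + RInt F (W x) (W y) + RInt F (W y) (W hi)))
      with (- (RInt F 0 (W x) + RInt F (W y) (W hi))) by ring.
    rewrite Rabs_Ropp. eapply Rle_lt_trans. apply Rabs_triang. lra.
Qed.


Lemma is_derive_eq (f : R -> R) x l l' : is_derive f x l -> l = l' -> is_derive f x l'.
Proof. intros H ->; auto. Qed.

Lemma Ga_deriv K0 K1 al s : 0 <= al -> lo < s ->
  is_derive (fun s => K0 * s + K1 * (/ (al + 1) * Rpower (s - lo) (al + 1))) s (K0 + K1 * Rpower (s - lo) al).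
Proof.
  intros Hal Hs.
  eapply is_derive_eq.
  apply (is_derive_plus (fun s => K0 * s) (fun s => K1 * (/ (al + 1) * Rpower (s - lo) (al + 1)))).
  apply is_derive_scal. apply (is_derive_id (K:=R_AbsRing)).
  apply is_derive_scal. apply is_derive_scal. apply deriv_pw; auto.
  unfold plus; simpl. replace (al + 1 - 1) with al by ring. unfold one; simpl. field. lra.
Qed.

Lemma E_deriv K0 K1 al s : 0 <= al -> lo < s ->
  is_derive (fun s => K0 * (/ (th*(th+1)) * Rpower (s-lo) (th+1)) + K1 * (/ (th*(th+al+1)) * Rpower (s-lo) (th+al+1))) s
   (W s * (K0 + K1 * Rpower (s - lo) al)).
Proof.
  intros Hal Hs.
  eapply is_derive_eq.
  apply (is_derive_plus (fun s => K0 * (/ (th*(th+1)) * Rpower (s-lo) (th+1))) (fun s => K1 * (/ (th*(th+al+1)) * Rpower (s-lo) (th+al+1)))).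
  apply is_derive_scal. apply is_derive_scal. apply deriv_pw; auto.
  apply is_derive_scal. apply is_derive_scal. apply deriv_pw; auto.
  unfold plus; simpl. unfold W. replace (th + 1 - 1) with th by ring. replace (th + al + 1 - 1) with (th + al) by ring.
  rewrite Rpower_plus. field. lra.
Qed.


Lemma main_bound (al K0 K1 : R) : 0 <= al -> 0 <= K0 ->
  (forall s, lo < s <= hi -> Rabs (h' s) <= K0 + K1 * Rpower (s - lo) al) ->
  Rabs (h hi * W hi - RInt F 0 (W hi)) <=
    K0 * (/ (th*(th+1)) * Rpower (hi - lo) (th+1)) + K1 * (/ (th*(th+al+1)) * Rpower (hi-lo) (th+al+1)).
Proof.
  intros Hal HK0 Hb.
  set (G s := K0 + K1 * Rpower (s - lo) al).
  set (Ga s := K0 * s + K1 * (/ (al + 1) * Rpower (s - lo) (al + 1))).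
  set (E s := K0 * (/ (th*(th+1)) * Rpower (s-lo) (th+1)) + K1 * (/ (th*(th+al+1)) * Rpower (s-lo) (th+al+1))).
  assert (HGa : forall s, lo < s -> is_derive Ga s (G s)) by (intros; apply Ga_deriv; auto).
  assert (HE : forall s, lo < s -> is_derive E s (W s * G s)) by (intros; apply E_deriv; auto).
  assert (HGpos : forall s, lo < s <= hi -> 0 <= G s).
  { intros s Hs. eapply Rle_trans; [apply Rabs_pos|apply Hb; auto]. }
  assert (Hpt : forall s, lo < s <= hi -> Rabs (h hi - h s) <= Ga hi - Ga s).
  { intros s Hs. apply Rabs_le. split.
    - assert (h s + Ga s <= h hi + Ga hi); [|lra].
      apply (mono_le (fun s => h s + Ga s) (fun s => h' s + G s)). lra.
      + intros u Hu. apply (is_derive_plus h Ga). apply Hd; lra. apply HGa; lra.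
      + intros u Hu. specialize (Hb u ltac:(lra)). apply Rabs_le_between in Hb. fold (G u) in Hb. lra.
    - assert (Ga s - h s <= Ga hi - h hi); [|lra].
      apply (mono_le (fun s => Ga s - h s) (fun s => G s - h' s)). lra.
      + intros u Hu. apply (is_derive_minus Ga h). apply HGa; lra. apply Hd; lra.
      + intros u Hu. specialize (Hb u ltac:(lra)). apply Rabs_le_between in Hb. fold (G u) in Hb. lra. }
  assert (HGamono : forall s, lo < s <= hi -> Ga s <= Ga hi).
  { intros s Hs. apply (mono_le Ga G). lra. intros u Hu; apply HGa; lra. intros u Hu; apply HGpos; lra. }
  assert (HEpos : forall s, lo < s <= hi -> 0 <= E s).
  { intros s Hs. unfold E. pose proof (HGpos s Hs) as HG. unfold G in HG.
    set (u := s - lo) in *.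
    replace (th + al + 1) with (th + 1 + al) by ring. rewrite (Rpower_plus (th + 1) al u).
    assert (Hr1 := Rpower_gt0 u (th+1)). assert (Hr2 := Rpower_gt0 u al).
    set (r1 := Rpower u (th+1)) in *. set (r2 := Rpower u al) in *.
    assert (Hinv : / (th * (th + 1 + al)) <= / (th * (th + 1))).
    { apply Rinv_le_contravar. nra. nra. }
    assert (0 < / (th * (th + 1 + al))) by (apply Rinv_0_lt_compat; nra).
    destruct (Rle_dec 0 K1).
    - assert (0 <= K1 * r2) by nra. assert (0 <= K0 * (/ (th * (th + 1)) * r1)).
      { apply Rmult_le_pos; auto. apply Rmult_le_pos; lra. }
      replace (K1 * (/ (th * (th + 1 + al)) * (r1 * r2))) with ((K1 * r2) * (/ (th * (th + 1 + al)) * r1)) by ring.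
      assert (0 <= (K1 * r2) * (/ (th * (th + 1 + al)) * r1)) by (apply Rmult_le_pos; [nra| apply Rmult_le_pos; lra]). lra.
    - assert (K1 * r2 <= 0) by nra.
      assert ((K1 * r2) * / (th * (th + 1)) <= (K1 * r2) * / (th * (th + 1 + al))) by nra.
      assert (0 <= (K0 + K1 * r2) * / (th * (th + 1)) * r1).
      { apply Rmult_le_pos; [|lra]. apply Rmult_le_pos; [lra|]. left; apply Rinv_0_lt_compat; nra. }
      nra. }
  assert (Hbx : forall x, lo < x < hi ->
     Rabs (h hi * (W hi - W x) - RInt g x hi) <= E hi).
  { intros x Hx.
    assert (Hrng : forall s, Rmin x hi <= s <= Rmax x hi -> lo < s <= hi).
    { intros s Hs. rewrite Rmin_left in Hs by lra. rewrite Rmax_right in Hs by lra. lra. }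
    assert (Hg : ex_RInt g x hi) by (apply comp_eq; lra).
    assert (HdW : is_RInt dW x hi (W hi - W x)).
    { apply (is_RInt_derive (V:=R_CompleteNormedModule) W dW).
      intros s Hs; apply W_deriv; auto; apply Hrng in Hs; lra.
      intros s Hs; apply cont_pw; apply Hrng in Hs; lra. }
    set (k s := dW s * (h hi - h s)).
    assert (Hk : is_RInt k x hi (h hi * (W hi - W x) - RInt g x hi)).
    { eapply is_RInt_ext. 2: apply (is_RInt_minus (V:=R_CompleteNormedModule) (fun s => h hi * dW s) g).
      - intros s _. unfold k, g, dW, minus, plus, opp; simpl. ring.
      - apply (is_RInt_scal (V:=R_CompleteNormedModule) dW). auto.
      - apply (RInt_correct (V:=R_CompleteNormedModule)). auto. }
    set (kb s := dW s * (Ga hi - Ga s)).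
    set (Psi s := W s * (Ga hi - Ga s) + E s).
    assert (Hkb : is_RInt kb x hi (Psi hi - Psi x)).
    { apply (is_RInt_derive (V:=R_CompleteNormedModule) Psi kb).
      - intros s Hs. apply Hrng in Hs. unfold Psi.
        eapply is_derive_eq.
        apply (is_derive_plus (fun s => W s * (Ga hi - Ga s)) E).
        apply (is_derive_mult W (fun s => Ga hi - Ga s)). apply W_deriv; lra.
        apply (is_derive_minus (fun _ => Ga hi) Ga). apply (is_derive_const (K:=R_AbsRing)). apply HGa; lra.
        intros; apply Rmult_comm. apply HE; lra.
        unfold kb, dW, plus, mult, minus, opp, zero; simpl. unfold plus; simpl. ring.
      - intros s Hs. apply Hrng in Hs. unfold kb.
        apply (continuous_mult dW (fun s => Ga hi - Ga s)). apply cont_pw; lra.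
        apply (continuous_minus (fun _ => Ga hi) Ga). apply continuous_const.
        apply (ex_derive_continuous (K:=R_AbsRing) (V:=R_NormedModule)). eexists; apply HGa; lra. }
    rewrite <- (is_RInt_unique _ _ _ _ Hk).
    eapply Rle_trans. apply abs_RInt_le. lra. eexists; exact Hk.
    eapply Rle_trans. apply (RInt_le _ kb). lra.
    { apply (ex_RInt_continuous (V:=R_CompleteNormedModule)). intros s Hs. apply Hrng in Hs.
      apply continuous_Rabs_comp. unfold k.
      apply (continuous_mult dW (fun s => h hi - h s)). apply cont_pw; lra.
      apply (continuous_minus (fun _ => h hi) h). apply continuous_const. apply h_cont; lra. }
    eexists; exact Hkb.
    intros s Hs. unfold k, kb. rewrite Rabs_mult, Rabs_right. apply Rmult_le_compat_l.
    left; apply Rpower_gt0. apply Hpt; lra. left; apply Rpower_gt0.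
    rewrite (is_RInt_unique _ _ _ _ Hkb). unfold Psi.
    assert (0 <= W x) by (left; apply W_pos; lra).
    assert (Ga x <= Ga hi) by (apply HGamono; lra).
    assert (0 <= E x) by (apply HEpos; lra).
    assert (0 <= W x * (Ga hi - Ga x)) by nra. lra. }
  destruct h_bound as [M [HM0 HM]].
  assert (HW0 : 0 < W hi) by (apply W_pos; lra).
  apply (lim_le _ _ (Rabs (h hi) + M) (W hi)); auto.
  { pose proof (Rabs_pos (h hi)); lra. }
  intros eta Heta.
  set (x := lo + Rpower (th * eta) (/ th)).
  assert (Hx0 : lo < x) by (unfold x; pose proof (Rpower_gt0 (th*eta) (/th)); lra).
  assert (HWx : W x = eta) by (unfold x; apply W_lo; lra).
  assert (Hx1 : x < hi).
  { destruct (Rlt_dec x hi) as [r|n]; auto. exfalso.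
    destruct (Req_dec x hi) as [e|n2]. rewrite e in HWx; lra.
    assert (W hi < W x) by (apply W_lt; lra). lra. }
  specialize (Hbx x (conj Hx0 Hx1)).
  destruct (comp_eq x hi ltac:(lra) ltac:(lra)) as [_ Hc]. rewrite Hc, HWx in Hbx.
  rewrite (chasles3 0 eta eta (W hi)) by lra. rewrite RInt_point. unfold zero; simpl.
  pose proof (F_small M 0 eta HM ltac:(lra) ltac:(lra)) as Hs.
  unfold E in Hbx.
  replace (h hi * W hi - (RInt F 0 eta + 0 + RInt F eta (W hi))) with
    ((h hi * (W hi - eta) - RInt F eta (W hi)) + (h hi * eta - RInt F 0 eta)) by ring.
  eapply Rle_trans. apply Rabs_triang.
  assert (Rabs (h hi * eta - RInt F 0 eta) <= (Rabs (h hi) + M) * eta).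
  { eapply Rle_trans. apply Rabs_triang. rewrite Rabs_Ropp, Rabs_mult, (Rabs_right eta) by lra. nra. }
  lra.
Qed.

End Gen.


Lemma left_gen (h h' : R -> R) (lo hi th al K0 K1 : R) :
  lo < hi -> 0 < th -> (forall s, lo <= s <= hi -> is_derive h s (h' s)) ->
  0 <= al -> 0 <= K0 ->
  (forall s, lo < s <= hi -> Rabs (h' s) <= K0 + K1 * Rpower (s - lo) al) ->
  Rabs (h hi * (/ th * Rpower (hi - lo) th) - improper_int (fun s => Rpower (s - lo) (th - 1) * h s) lo hi) <=
    K0 * (/ (th*(th+1)) * Rpower (hi - lo) (th+1)) + K1 * (/ (th*(th+al+1)) * Rpower (hi-lo) (th+al+1)).
Proof.
  intros Hlh Hth Hd Hal HK0 Hb.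
  rewrite (improper_unique _ _ _ _ Hlh (improper_is h h' lo hi th Hlh Hth Hd)).
  apply (main_bound h h' lo hi th Hlh Hth Hd al K0 K1 Hal HK0 Hb).
Qed.

Lemma left_gen_is (h h' : R -> R) (lo hi th al K0 K1 : R) :
  lo < hi -> 0 < th -> (forall s, lo <= s <= hi -> is_derive h s (h' s)) ->
  0 <= al -> 0 <= K0 ->
  (forall s, lo < s <= hi -> Rabs (h' s) <= K0 + K1 * Rpower (s - lo) al) ->
  exists V, improper_int_is (fun s => Rpower (s - lo) (th - 1) * h s) lo hi V /\
  Rabs (h hi * (/ th * Rpower (hi - lo) th) - V) <=
    K0 * (/ (th*(th+1)) * Rpower (hi - lo) (th+1)) + K1 * (/ (th*(th+al+1)) * Rpower (hi-lo) (th+al+1)).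
Proof.
  intros Hlh Hth Hd Hal HK0 Hb.
  eexists. split. apply (improper_is h h' lo hi th Hlh Hth Hd).
  apply (main_bound h h' lo hi th Hlh Hth Hd al K0 K1 Hal HK0 Hb).
Qed.

Definition gamf (t s : R) := Rpower s (t - 1) * exp (- s).

Lemma exp_le x y : x <= y -> exp x <= exp y.
Proof. intros [H|H]. left; apply exp_increasing; auto. subst; lra. Qed.

Lemma gt_pos t s : 0 < gamf t s.
Proof. unfold gamf. apply Rmult_lt_0_compat. apply Rpower_gt0. apply exp_pos. Qed.

Lemma gt_cont t s : 0 < s -> continuous (gamf t) s.
Proof.
  intros H. unfold gamf. apply (continuous_mult (fun s => Rpower s (t-1)) (fun s => exp (- s))).
  apply cont_Rpow; auto.
  apply (ex_derive_continuous (K:=R_AbsRing) (V:=R_NormedModule)). auto_derive; auto.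
Qed.

Lemma ex_gt t x y : 0 < x -> 0 < y -> ex_RInt (gamf t) x y.
Proof.
  intros Hx Hy. apply (ex_RInt_continuous (V:=R_CompleteNormedModule)). intros z Hz. apply gt_cont.
  eapply Rlt_le_trans; [|apply Hz]. apply Rmin_glb_lt; auto.
Qed.

Lemma Rpower_1l t : Rpower 1 t = 1.
Proof. unfold Rpower. rewrite ln_1, Rmult_0_r, exp_0. auto. Qed.

Lemma gt_tail t : exists C, 0 < C /\ forall s, 1 <= s -> gamf t s <= C * exp (- s / 2).
Proof.
  set (k := 2 * (Rabs (t - 1) + 1)).
  assert (Hk : 0 < k) by (unfold k; pose proof (Rabs_pos (t-1)); lra).
  exists (exp (Rabs (t - 1) * Rabs (ln k - 1))). split. apply exp_pos.
  intros s Hs. unfold gamf, Rpower. rewrite <- !exp_plus. apply exp_le.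
  assert (Hl : ln s <= s / k + ln k - 1) by (apply ln_le_lin; lra).
  assert (Hl0 : 0 <= ln s). { rewrite <- ln_1. destruct Hs as [Hs|Hs]. left; apply ln_increasing; lra. subst; lra. }
  assert (H1 : (t - 1) * ln s <= Rabs (t - 1) * ln s).
  { apply Rmult_le_compat_r; auto. apply Rle_abs. }
  assert (H2 : Rabs (t - 1) * ln s <= Rabs (t - 1) * (s / k) + Rabs (t - 1) * Rabs (ln k - 1)).
  { pose proof (Rle_abs (ln k - 1)). pose proof (Rabs_pos (t-1)).
    rewrite <- Rmult_plus_distr_l. apply Rmult_le_compat_l; auto. lra. }
  assert (H3 : Rabs (t - 1) * (s / k) <= s / 2).
  { unfold k. apply Rmult_le_reg_r with (2 * (Rabs (t - 1) + 1)). pose proof (Rabs_pos (t-1)); lra.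
    field_simplify; try (pose proof (Rabs_pos (t-1)); lra). }
  lra.
Qed.

Lemma pw_deriv0 t s : 0 < t -> 0 < s -> is_derive (fun s => / t * Rpower s t) s (Rpower s (t - 1)).
Proof.
  intros Ht Hs. replace (Rpower s (t - 1)) with (/ t * (t * Rpower s (t - 1))) by (field; lra).
  apply is_derive_scal. apply is_derive_Reals. apply derivable_pt_lim_power. auto.
Qed.

Lemma RInt_pw t x y : 0 < t -> 0 < x <= y -> RInt (fun s => Rpower s (t - 1)) x y = / t * Rpower y t - / t * Rpower x t.
Proof.
  intros Ht Hxy. apply is_RInt_unique.
  apply (is_RInt_derive (V:=R_CompleteNormedModule) (fun s => / t * Rpower s t)).
  - intros s Hs. rewrite Rmin_left in Hs by lra. apply pw_deriv0; lra.
  - intros s Hs. rewrite Rmin_left in Hs by lra. apply cont_Rpow. lra.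
Qed.

Lemma gt_head t x y : 0 < t -> 0 < x <= y -> y <= 1 -> RInt (gamf t) x y <= / t.
Proof.
  intros Ht Hxy Hy.
  eapply Rle_trans. apply (RInt_le _ (fun s => Rpower s (t - 1))). lra.
  apply ex_gt; lra.
  apply (ex_RInt_continuous (V:=R_CompleteNormedModule)). intros z Hz. rewrite Rmin_left in Hz by lra. apply cont_Rpow; lra.
  intros s Hs. unfold gamf. rewrite <- (Rmult_1_r (Rpower s (t-1))) at 2. apply Rmult_le_compat_l.
  left; apply Rpower_gt0. rewrite <- exp_0. apply exp_le. lra.
  rewrite RInt_pw by lra.
  assert (Rpower y t <= 1).
  { rewrite <- (Rpower_1l t). apply Rle_Rpower_l; lra. }
  assert (0 < / t * Rpower x t) by (apply Rmult_lt_0_compat; [apply Rinv_0_lt_compat; auto|apply Rpower_gt0]).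
  assert (/ t * Rpower y t <= / t * 1) by (apply Rmult_le_compat_l; [left; apply Rinv_0_lt_compat|]; auto).
  lra.
Qed.

Lemma gt_tailint t C x y : 0 < C -> (forall s, 1 <= s -> gamf t s <= C * exp (- s / 2)) ->
  1 <= x <= y -> RInt (gamf t) x y <= 2 * C.
Proof.
  intros HC Hb Hxy.
  eapply Rle_trans. apply (RInt_le _ (fun s => C * exp (- s / 2))). lra.
  apply ex_gt; lra.
  apply (ex_RInt_continuous (V:=R_CompleteNormedModule)). intros z Hz.
  apply (ex_derive_continuous (K:=R_AbsRing) (V:=R_NormedModule)). auto_derive; auto.
  intros s Hs. apply Hb. lra.
  rewrite (is_RInt_unique _ x y (- 2 * C * exp (- y / 2) - (- 2 * C * exp (- x / 2)))).
  assert (0 < exp (- y / 2)) by apply exp_pos.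
  assert (exp (- x / 2) <= 1) by (rewrite <- exp_0; apply exp_le; lra). nra.
  apply (is_RInt_derive (V:=R_CompleteNormedModule) (fun s => - 2 * C * exp (- s / 2))).
  - intros s Hs. auto_derive; auto. rewrite Rdiv_def. field.
  - intros s Hs. apply (ex_derive_continuous (K:=R_AbsRing) (V:=R_NormedModule)). auto_derive; auto.
Qed.

Lemma chasles_gt t a b c : 0 < a -> 0 < b -> 0 < c -> RInt (gamf t) a c = RInt (gamf t) a b + RInt (gamf t) b c.
Proof.
  intros. pose proof (RInt_Chasles (V:=R_CompleteNormedModule) (gamf t) a b c (ex_gt t a b H H0) (ex_gt t b c H0 H1)).
  simpl in *. unfold plus in *; simpl in *. lra.
Qed.

Lemma gt_ge0 t a b : 0 < a <= b -> 0 <= RInt (gamf t) a b.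
Proof. intros H. apply RInt_ge_0. lra. apply ex_gt; lra. intros; left; apply gt_pos. Qed.

Lemma gt_mono t x' x y y' : 0 < x' <= x -> x <= y -> y <= y' -> RInt (gamf t) x y <= RInt (gamf t) x' y'.
Proof.
  intros. rewrite (chasles_gt t x' x y') by lra. rewrite (chasles_gt t x y y') by lra.
  pose proof (gt_ge0 t x' x). pose proof (gt_ge0 t y y'). lra.
Qed.

Lemma gt_bound t : 0 < t -> exists B, forall x y, 0 < x <= y -> RInt (gamf t) x y <= B.
Proof.
  intros Ht. destruct (gt_tail t) as [C [HC Hb]].
  exists (/ t + 2 * C). intros x y Hxy.
  eapply Rle_trans. apply (gt_mono t (Rmin x 1) x y (Rmax y 1)).
  split. apply Rmin_pos; lra. apply Rmin_l. lra. apply Rmax_l.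
  rewrite (chasles_gt t _ 1) by (try apply Rmin_pos; try (eapply Rlt_le_trans; [|apply Rmax_r]); lra).
  pose proof (gt_head t (Rmin x 1) 1 Ht ltac:(split; [apply Rmin_pos; lra| apply Rmin_r]) ltac:(lra)).
  pose proof (gt_tailint t C 1 (Rmax y 1) HC Hb ltac:(split; [lra|apply Rmax_r])). lra.
Qed.

Lemma gamma_exists t : 0 < t -> exists G, 0 < G /\ improper_int_0_infty_is (gamf t) G.
Proof.
  intros Ht. destruct (gt_bound t Ht) as [B HB].
  set (E := fun v => exists x y, 0 < x <= y /\ v = RInt (gamf t) x y).
  assert (Hb : bound E). { exists B. intros v [x [y [Hxy ->]]]. apply HB; auto. }
  assert (Hne : exists v, E v). { exists (RInt (gamf t) 1 1). exists 1, 1. split; [lra|auto]. }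
  destruct (completeness E Hb Hne) as [G [Hub Hlub]].
  assert (HG12 : RInt (gamf t) 1 2 <= G). { apply Hub. exists 1, 2. split; [lra|auto]. }
  assert (Hp : 0 < RInt (gamf t) 1 2).
  { apply RInt_gt_0. lra. intros; apply gt_pos. intros; apply gt_cont; lra. }
  exists G. split. lra. split.
  - intros x y Hx Hxy. constructor. apply ex_RInt_Reals_0. apply ex_gt; lra.
  - intros eps Heps.
    assert (Hex : exists v, E v /\ G - eps < v).
    { apply NNPP. intros Hn. assert (G <= G - eps); [|lra].
      apply Hlub. intros v Hv. destruct (Rle_dec v (G - eps)) as [r|n]; auto.
      exfalso. apply Hn. exists v. split; auto. lra. }
    destruct Hex as [v [[x0 [y0 [Hxy0 ->]]] Hv]].
    exists x0, y0. split. lra.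
    intros x y pr Hx Hx0 Hxy Hy. rewrite <- RInt_Reals.
    change (RInt (fun s => Rpower s (t - 1) * exp (- s)) x y) with (RInt (gamf t) x y).
    assert (H1 : RInt (gamf t) x0 y0 <= RInt (gamf t) x y) by (apply gt_mono; lra).
    assert (H2 : RInt (gamf t) x y <= G) by (apply Hub; exists x, y; split; [lra|auto]).
    apply Rabs_def1; lra.
Qed.

Lemma unique0 g v v' : improper_int_0_infty_is g v -> improper_int_0_infty_is g v' -> v = v'.
Proof.
  intros [Hi Hl] [_ Hl']. apply eq_eps. intros eps Heps.
  destruct (Hl (eps/2)) as [d1 [M1 [Hd1 H1]]]; [lra|].
  destruct (Hl' (eps/2)) as [d2 [M2 [Hd2 H2]]]; [lra|].
  set (x := Rmin d1 d2 / 2). set (y := Rmax (Rmax M1 M2) x + 1).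
  assert (Hm := Rmin_pos d1 d2 Hd1 Hd2). assert (Hx : 0 < x) by (unfold x; lra).
  assert (Hx1 : x < d1) by (unfold x; pose proof (Rmin_l d1 d2); pose proof (Rmin_pos d1 d2 Hd1 Hd2); lra).
  assert (Hx2 : x < d2) by (unfold x; pose proof (Rmin_r d1 d2); pose proof (Rmin_pos d1 d2 Hd1 Hd2); lra).
  assert (Hy1 : M1 < y) by (unfold y; pose proof (Rmax_l (Rmax M1 M2) x); pose proof (Rmax_l M1 M2); lra).
  assert (Hy2 : M2 < y) by (unfold y; pose proof (Rmax_l (Rmax M1 M2) x); pose proof (Rmax_r M1 M2); lra).
  assert (Hxy : x <= y) by (unfold y; pose proof (Rmax_r (Rmax M1 M2) x); lra).
  destruct (Hi x y Hx Hxy) as [pr].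
  specialize (H1 x y pr Hx Hx1 Hxy Hy1). specialize (H2 x y pr Hx Hx2 Hxy Hy2).
  apply Rabs_def2 in H1. apply Rabs_def2 in H2. apply Rabs_def1; lra.
Qed.

Lemma Gamma_val t : 0 < t -> 0 < Gamma t /\ improper_int_0_infty_is (gamf t) (Gamma t).
Proof.
  intros Ht. destruct (gamma_exists t Ht) as [G [HG HP]].
  assert (HS : improper_int_0_infty_is (gamf t) (Gamma t)).
  { unfold Gamma. apply epsilon_spec. exists G. exact HP. }
  rewrite (unique0 _ _ _ HS HP). auto.
Qed.

Lemma is_derive_eq' (f : R -> R) x l l' : is_derive f x l -> l = l' -> is_derive f x l'.
Proof. intros H ->; auto. Qed.

Lemma gt_ibp t x y : 0 < t -> 0 < x <= y ->
  RInt (gamf (t + 1)) x y = Rpower x t * exp (- x) - Rpower y t * exp (- y) + t * RInt (gamf t) x y.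
Proof.
  intros Ht Hxy.
  set (Phi s := - (Rpower s t * exp (- s))).
  assert (H1 : is_RInt (fun s => gamf (t + 1) s - t * gamf t s) x y (Phi y - Phi x)).
  { apply (is_RInt_derive (V:=R_CompleteNormedModule) Phi).
    - intros s Hs. rewrite Rmin_left in Hs by lra. unfold Phi.
      eapply is_derive_eq'.
      apply (is_derive_opp (fun s => Rpower s t * exp (- s))).
      apply (is_derive_mult (fun s => Rpower s t) (fun s => exp (- s))).
      apply is_derive_Reals. apply derivable_pt_lim_power. lra.
      auto_derive; auto. intros; apply Rmult_comm.
      unfold gamf, opp, plus, mult; simpl. replace (t + 1 - 1) with t by ring. ring.
    - intros s Hs. rewrite Rmin_left in Hs by lra.
      apply (continuous_minus (gamf (t+1)) (fun s => t * gamf t s)). apply gt_cont; lra.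
      apply (continuous_scal_r t (gamf t)). apply gt_cont; lra. }
  assert (H2 : is_RInt (gamf t) x y (RInt (gamf t) x y)).
  { apply (RInt_correct (V:=R_CompleteNormedModule)). apply ex_gt; lra. }
  apply is_RInt_unique.
  replace (Rpower x t * exp (- x) - Rpower y t * exp (- y) + t * RInt (gamf t) x y)
    with (plus (Phi y - Phi x) (scal t (RInt (gamf t) x y))).
  eapply is_RInt_ext. 2: apply (is_RInt_plus (V:=R_CompleteNormedModule) _ _ _ _ _ _ H1 (is_RInt_scal (V:=R_CompleteNormedModule) _ _ _ t _ H2)).
  - intros s _. unfold plus, scal; simpl; unfold mult; simpl. ring.
  - unfold Phi, plus, scal; simpl; unfold mult; simpl. ring.
Qed.

Lemma Gamma_succ t : 0 < t -> Gamma (t + 1) = t * Gamma t.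
Proof.
  intros Ht.
  destruct (Gamma_val t Ht) as [_ [Hi0 Hl0]].
  destruct (Gamma_val (t+1) ltac:(lra)) as [_ [Hi1 Hl1]].
  destruct (gt_tail (t + 1)) as [C [HC Hb]].
  apply eq_eps. intros eps Heps.
  destruct (Hl1 (eps/4)) as [d1 [M1 [Hd1 H1]]]; [lra|].
  destruct (Hl0 (eps/(4*t))) as [d0 [M0 [Hd0 H0]]]; [apply Rdiv_lt_0_compat; lra|].
  set (xb := Rpower (eps/4) (/ t)).
  set (yb := - 2 * ln (eps / (4 * C))).
  assert (Hxb : 0 < xb) by apply Rpower_gt0.
  set (x := Rmin (Rmin d1 d0) (Rmin 1 xb) / 2).
  set (y := Rmax (Rmax M1 M0) (Rmax 1 yb) + 1).
  assert (Hm1 := Rmin_pos d1 d0 Hd1 Hd0).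
  assert (Hm2 := Rmin_pos 1 xb ltac:(lra) Hxb).
  assert (Hm3 := Rmin_pos _ _ Hm1 Hm2).
  assert (Hx : 0 < x) by (unfold x; lra).
  assert (Hxl : x < Rmin (Rmin d1 d0) (Rmin 1 xb)) by (unfold x; lra).
  pose proof (Rmin_l (Rmin d1 d0) (Rmin 1 xb)). pose proof (Rmin_r (Rmin d1 d0) (Rmin 1 xb)).
  pose proof (Rmin_l d1 d0). pose proof (Rmin_r d1 d0). pose proof (Rmin_l 1 xb). pose proof (Rmin_r 1 xb).
  pose proof (Rmax_l (Rmax M1 M0) (Rmax 1 yb)). pose proof (Rmax_r (Rmax M1 M0) (Rmax 1 yb)).
  pose proof (Rmax_l M1 M0). pose proof (Rmax_r M1 M0). pose proof (Rmax_l 1 yb). pose proof (Rmax_r 1 yb).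
  assert (Hxy : x <= y) by (unfold y; lra).
  destruct (Hi1 x y Hx Hxy) as [pr1]. destruct (Hi0 x y Hx Hxy) as [pr0].
  specialize (H1 x y pr1 Hx ltac:(lra) Hxy ltac:(unfold y; lra)).
  specialize (H0 x y pr0 Hx ltac:(lra) Hxy ltac:(unfold y; lra)).
  rewrite <- RInt_Reals in H1, H0.
  change (RInt (fun s => Rpower s (t + 1 - 1) * exp (- s)) x y) with (RInt (gamf (t+1)) x y) in H1.
  change (RInt (fun s => Rpower s (t - 1) * exp (- s)) x y) with (RInt (gamf t) x y) in H0.
  rewrite gt_ibp in H1 by lra.
  assert (Bx : 0 < Rpower x t * exp (- x) < eps / 4).
  { split. apply Rmult_lt_0_compat; [apply Rpower_gt0|apply exp_pos].
    assert (Rpower x t < eps / 4).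
    { replace (eps / 4) with (Rpower xb t) by (unfold xb; rewrite Rpower_mult, Rinv_l, Rpower_1; lra).
      apply Rlt_Rpower_l; lra. }
    assert (exp (- x) <= 1) by (rewrite <- exp_0; apply exp_le; lra).
    assert (0 < Rpower x t) by apply Rpower_gt0. nra. }
  assert (By : 0 < Rpower y t * exp (- y) < eps / 4).
  { split. apply Rmult_lt_0_compat; [apply Rpower_gt0|apply exp_pos].
    specialize (Hb y ltac:(unfold y; lra)). unfold gamf in Hb. replace (t + 1 - 1) with t in Hb by ring.
    assert (exp (- y / 2) < eps / (4 * C)).
    { rewrite <- (exp_ln (eps / (4 * C))) by (apply Rdiv_lt_0_compat; lra).
      apply exp_increasing. unfold y, yb in *. lra. }
    assert (HC2 : C * exp (- y / 2) < C * (eps / (4 * C))) by (apply Rmult_lt_compat_l; auto).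
    replace (C * (eps / (4 * C))) with (eps / 4) in HC2 by (field; lra). lra. }
  apply Rabs_def2 in H1. apply Rabs_def2 in H0.
  assert (HT : t * Rabs (RInt (gamf t) x y - Gamma t) < t * (eps / (4 * t))).
  { apply Rmult_lt_compat_l; auto. apply Rabs_def1; lra. }
  replace (t * (eps / (4 * t))) with (eps / 4) in HT by (field; lra).
  assert (HT2 : Rabs (t * (RInt (gamf t) x y - Gamma t)) < eps / 4) by (rewrite Rabs_mult, (Rabs_right t) by lra; lra).
  apply Rabs_def2 in HT2. rewrite Rmult_minus_distr_l in HT2. apply Rabs_def1; lra.
Qed.

Lemma rpow_ge0 x y : 0 <= rpow x y.
Proof. unfold rpow. destruct (Req_EM_T x 0); [destruct (Req_EM_T y 0); lra|]. left; apply Rpower_gt0. Qed.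

Lemma rpow_rpow x q : 0 <= x -> 1 <= q -> rpow (rpow x q) (1 / q) = x.
Proof.
  intros Hx Hq. destruct (Req_dec x 0) as [->|n].
  - rewrite rpow_0l by lra. apply rpow_0l. apply Rgt_not_eq. apply Rdiv_lt_0_compat; lra.
  - rewrite (rpow_pos x) by lra. rewrite rpow_pos by apply Rpower_gt0.
    rewrite Rpower_mult. replace (q * (1 / q)) with 1 by (field; lra). apply Rpower_1; lra.
Qed.

Lemma rpow_mult x y p : 0 <= x -> 0 <= y -> p <> 0 -> rpow (x * y) p = rpow x p * rpow y p.
Proof.
  intros Hx Hy Hp. destruct (Req_dec x 0) as [->|n].
  - rewrite Rmult_0_l, rpow_0l by auto. ring.
  - destruct (Req_dec y 0) as [->|n2].
    + rewrite Rmult_0_r, rpow_0l by auto. ring.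
    + rewrite !rpow_pos by nra. rewrite Rpower_mult_distr; auto; lra.
Qed.

Lemma Rpower_le1 z r : 1 <= z -> r <= 0 -> Rpower z r <= 1.
Proof.
  intros Hz Hr. unfold Rpower. rewrite <- exp_0. apply exp_le.
  assert (0 <= ln z). { rewrite <- ln_1. destruct Hz as [Hz|Hz]. left; apply ln_increasing; lra. subst; lra. }
  nra.
Qed.

Lemma Rpower_ge1 z r : 0 < z <= 1 -> r <= 0 -> 1 <= Rpower z r.
Proof.
  intros Hz Hr. unfold Rpower. rewrite <- exp_0. apply exp_le.
  assert (ln z <= 0). { rewrite <- ln_1. destruct (proj2 Hz) as [H|H]. left; apply ln_increasing; lra. subst; lra. }
  nra.
Qed.

Lemma bernoulli z r : 0 < z -> 0 < r <= 1 -> Rpower z r <= 1 + r * (z - 1).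
Proof.
  intros Hz Hr.
  assert (Hd : forall s, 0 < s -> is_derive (fun s => 1 + r * (s - 1) - Rpower s r) s (r - r * Rpower s (r - 1))).
  { intros s Hs. apply (is_derive_minus (fun s => 1 + r * (s - 1)) (fun s => Rpower s r)). auto_derive; auto. ring.
    apply is_derive_Reals. apply derivable_pt_lim_power. auto. }
  destruct (Rle_dec 1 z).
  - pose proof (mono_le (fun s => 1 + r * (s - 1) - Rpower s r) (fun s => r - r * Rpower s (r - 1)) 1 z r0) as H.
    simpl in H. rewrite Rpower_1l in H. enough (1 + r * (1 - 1) - 1 <= 1 + r * (z - 1) - Rpower z r) by lra.
    apply H. intros s Hs; apply Hd; lra.
    intros s Hs. pose proof (Rpower_le1 s (r - 1) ltac:(lra) ltac:(lra)). nra.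
  - pose proof (mono_le (fun s => -(1 + r * (s - 1) - Rpower s r)) (fun s => -(r - r * Rpower s (r - 1))) z 1 ltac:(lra)) as H.
    simpl in H. rewrite Rpower_1l in H. enough (- (1 + r * (z - 1) - Rpower z r) <= - (1 + r * (1 - 1) - 1)) by lra.
    apply H.
    intros s Hs. apply (is_derive_opp (fun s => 1 + r * (s - 1) - Rpower s r)). apply Hd; lra.
    intros s Hs. pose proof (Rpower_ge1 s (r - 1) ltac:(lra) ltac:(lra)). nra.
Qed.

Lemma tangent x Y q : 0 <= x -> 0 < Y -> 1 <= q ->
  rpow x (1 / q) <= Rpower Y (1 / q) + (1 / q) * Rpower Y (1 / q - 1) * (x - Y).
Proof.
  intros Hx HY Hq.
  assert (Hr : 0 < 1 / q <= 1). { split. apply Rdiv_lt_0_compat; lra. unfold Rdiv; rewrite Rmult_1_l. rewrite <- Rinv_1. apply Rinv_le_contravar; lra. }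
  assert (HYr : Rpower Y (1 / q - 1) * Y = Rpower Y (1 / q)).
  { replace (Rpower Y (1 / q)) with (Rpower Y ((1 / q - 1) + 1)) by (f_equal; ring).
    rewrite Rpower_plus, Rpower_1 by auto. reflexivity. }
  assert (Hp := Rpower_gt0 Y (1/q - 1)).
  destruct (Req_dec x 0) as [->|n].
  - rewrite rpow_0l by lra. rewrite <- HYr.
    replace (Rpower Y (1 / q - 1) * Y + 1 / q * Rpower Y (1 / q - 1) * (0 - Y)) with ((1 - 1/q) * (Rpower Y (1 / q - 1) * Y)) by ring.
    apply Rmult_le_pos. lra. nra.
  - rewrite rpow_pos by lra.
    pose proof (bernoulli (x / Y) (1 / q) ltac:(apply Rdiv_lt_0_compat; lra) Hr) as B.
    replace x with (Y * (x / Y)) at 1 by (field; lra).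
    rewrite <- Rpower_mult_distr by (try apply Rdiv_lt_0_compat; lra).
    assert (HY1 := Rpower_gt0 Y (1/q)).
    apply Rmult_le_compat_l with (r := Rpower Y (1 / q)) in B; [|lra].
    eapply Rle_trans. apply B.
    rewrite <- HYr. right. field. lra.
Qed.

Lemma Rpower_div u L a : 0 < u -> 0 < L -> Rpower (u / L) a = Rpower u a / Rpower L a.
Proof.
  intros Hu HL. unfold Rdiv. rewrite <- Rpower_mult_distr by (try apply Rinv_0_lt_compat; auto).
  f_equal. unfold Rpower. rewrite ln_Rinv by auto. rewrite <- exp_Ropp. f_equal. ring.
Qed.

Lemma side (h h' : R -> R) lo hi th al q m A B :
  lo < hi -> 0 < th -> 0 <= al <= 1 -> 1 <= q -> 0 < m -> 0 <= A -> 0 <= B ->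
  (forall s, lo <= s <= hi -> is_derive h s (h' s)) ->
  (forall s, lo < s <= hi -> rpow (Rabs (h' s)) q <=
      rpow ((s - lo) / (hi - lo)) al * A + m * (1 - rpow ((s - lo) / (hi - lo)) al) * B) ->
  exists V, improper_int_is (fun s => Rpower (s - lo) (th - 1) * h s) lo hi V /\
  Rabs (h hi * (/ th * Rpower (hi - lo) th) - V) <=
     Rpower (hi - lo) (th + 1) / th * / (th + 1) *
       (rpow (1 / (al + th + 1)) (1 / q) * rpow ((th + 1) * A + al * m * B) (1 / q)).
Proof.
  intros Hlh Hth Hal Hq Hm HA HB Hd Hc.
  set (L := hi - lo). assert (HL : 0 < L) by (unfold L; lra).
  set (P := (th + 1) * A + al * m * B).
  assert (HP : 0 <= P) by (unfold P; assert (0 <= al * m * B) by (apply Rmult_le_pos; nra); nra).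
  assert (Hq1 : 1 / q <> 0) by (apply Rgt_not_eq; apply Rdiv_lt_0_compat; lra).
  assert (Hr0 : forall s, lo < s <= hi -> rpow ((s - lo) / L) al = Rpower (s - lo) al / Rpower L al).
  { intros s Hs. rewrite rpow_pos. apply Rpower_div; lra. apply Rdiv_lt_0_compat; lra. }
  assert (Hk : forall s, lo < s <= hi -> Rabs (h' s) = rpow (rpow (Rabs (h' s)) q) (1 / q)).
  { intros s Hs. rewrite rpow_rpow; auto. apply Rabs_pos. }
  destruct (Req_dec P 0) as [HP0|HP0].
  -
    assert (HA0 : A = 0) by (unfold P in HP0; assert (0 <= al * m * B) by (apply Rmult_le_pos; nra); nra).
    assert (HaB : al * B = 0).
    { unfold P in HP0. rewrite HA0 in HP0. assert (al * B * m = 0) by lra.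
      apply Rmult_integral in H. destruct H; lra. }
    destruct (left_gen_is h h' lo hi th al 0 0 Hlh Hth Hd ltac:(lra) ltac:(lra)) as [V [HV HVb]].
    + intros s Hs. rewrite Hk by auto. 
      assert (HT : rpow (Rabs (h' s)) q <= 0).
      { eapply Rle_trans. apply Hc; auto. rewrite HA0.
        destruct (Req_dec al 0) as [->|n].
        - unfold rpow. destruct (Req_EM_T _ 0). destruct (Req_EM_T 0 0); lra. rewrite Rpower_O. lra.
          apply Rdiv_lt_0_compat; lra.
        - assert (B = 0) by (apply Rmult_integral in HaB; destruct HaB; lra). subst B. lra. }
      assert (rpow (Rabs (h' s)) q = 0) by (pose proof (rpow_ge0 (Rabs (h' s)) q); lra).
      rewrite H, rpow_0l; auto. lra.
    + exists V. split; auto. fold P. rewrite HP0, (rpow_0l (1/q)) by auto.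
      eapply Rle_trans. apply HVb. lra.
  - assert (HPp : 0 < P) by lra.
    set (Y := 1 / (al + th + 1) * P).
    assert (HY : 0 < Y) by (unfold Y; apply Rmult_lt_0_compat; auto; apply Rdiv_lt_0_compat; lra).
    rewrite <- rpow_mult by (try (left; apply Rdiv_lt_0_compat); lra). fold Y.
    rewrite rpow_pos by auto.
    set (RY := Rpower Y (1 / q - 1)).
    assert (HRY : 0 < RY) by apply Rpower_gt0.
    assert (HYr : RY * Y = Rpower Y (1 / q)).
    { unfold RY. replace (Rpower Y (1 / q)) with (Rpower Y ((1 / q - 1) + 1)) by (f_equal; ring).
      rewrite Rpower_plus, Rpower_1 by auto. reflexivity. }
    set (K0 := Rpower Y (1 / q) + (1 / q) * RY * (m * B - Y)).
    set (K1 := (1 / q) * RY * (A - m * B)).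
    assert (HK0 : 0 <= K0).
    { unfold K0. rewrite <- HYr.
      replace (RY * Y + 1 / q * RY * (m * B - Y)) with ((1 - 1/q) * (RY * Y) + 1/q * RY * (m * B)) by ring.
      assert (1 / q <= 1). { unfold Rdiv; rewrite Rmult_1_l. rewrite <- Rinv_1. apply Rinv_le_contravar; lra. }
      assert (0 < 1 / q) by (apply Rdiv_lt_0_compat; lra).
      assert (0 <= RY * Y) by nra. assert (0 <= 1 / q * RY * (m * B)).
      { apply Rmult_le_pos. nra. nra. }
      nra. }
    assert (HRL := Rpower_gt0 L al).
    destruct (left_gen_is h h' lo hi th al K0 (K1 / Rpower L al) Hlh Hth Hd ltac:(lra) HK0) as [V [HV HVb]].
    + intros s Hs. rewrite Hk by auto.
      eapply Rle_trans. apply (tangent _ Y q); auto. apply rpow_ge0.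
      fold RY. specialize (Hc s Hs). fold L in Hc. rewrite Hr0 in Hc by auto.
      assert (0 <= 1 / q * RY) by (apply Rmult_le_pos; [left; apply Rdiv_lt_0_compat; lra|lra]).
      assert (HH : 1 / q * RY * (rpow (Rabs (h' s)) q - Y) <=
                   1 / q * RY * (Rpower (s - lo) al / Rpower L al * A + m * (1 - Rpower (s - lo) al / Rpower L al) * B - Y)).
      { apply Rmult_le_compat_l; auto. lra. }
      unfold K0, K1.
      assert (E : 1 / q * RY * (Rpower (s - lo) al / Rpower L al * A + m * (1 - Rpower (s - lo) al / Rpower L al) * B - Y)
        = 1 / q * RY * (m * B - Y) + 1 / q * RY * (A - m * B) / Rpower L al * Rpower (s - lo) al) by (field; lra).
      lra.
    + exists V. split; auto. eapply Rle_trans. apply HVb. fold L.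
      right. replace (th + al + 1) with ((th + 1) + al) by ring. rewrite (Rpower_plus (th + 1) al L).
      rewrite <- HYr. unfold K0, K1. rewrite <- HYr. unfold Y.
      unfold P. field. repeat split; try lra; apply Rgt_not_eq; lra.
Qed.

Theorem mainTheorem6 (q : R) (I : R -> Prop) (f f' : R -> R) (m alpha a b : R)
  (hq : 1 <= q)
  (hI : is_interval I) (hI0 : forall x, I x -> 0 <= x)
  (hf' : forall x, interior I x -> derivable_pt_lim f x (f' x))
  (hm : 0 < m <= 1) (halpha : 0 <= alpha <= 1) (hab : a < b)
  (hma : interior I (m * a)) (hb : interior I b)
  (hconv : alpha_m_convex alpha m (fun x => m * a <= x <= b)
             (fun x => rpow (Rabs (f' x)) q))
  (theta : R) (htheta : 0 < theta) :
  let c := m * (a + b) / 2 in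
  Rabs (f c - Gamma (theta + 1) * rpow 2 (theta - 1)
                / (rpow m theta * rpow (b - a) theta)
              * (J_left theta c f (m * a) + J_right theta c f (m * b)))
  <= m * (b - a) / 4 * (1 / (theta + 1)) * rpow (1 / (alpha + theta + 1)) (1 / q)
     * (rpow ((theta + 1) * rpow (Rabs (f' c)) q + alpha * m * rpow (Rabs (f' a)) q) (1 / q)
        + rpow ((theta + 1) * rpow (Rabs (f' c)) q + alpha * m * rpow (Rabs (f' b)) q) (1 / q)).
Proof.
  intros c.
  destruct hma as [d1 Hd1]. destruct hb as [d2 Hd2].
  assert (HIma : I (m * a)) by (apply Hd1; unfold disc; rewrite Rminus_diag, Rabs_R0; apply cond_pos).
  assert (HIb : I b) by (apply Hd2; unfold disc; rewrite Rminus_diag, Rabs_R0; apply cond_pos).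
  assert (Hma0 : 0 < m * a).
  { pose proof (hI0 _ HIma). destruct (Req_dec (m * a) 0) as [e|n]; [|lra].
    assert (I (m * a - d1 / 2)).
    { apply Hd1. unfold disc. replace (m * a - d1 / 2 - m * a) with (- (d1/2)) by ring.
      rewrite Rabs_Ropp, Rabs_right; pose proof (cond_pos d1); lra. }
    apply hI0 in H0. pose proof (cond_pos d1). lra. }
  assert (Ha0 : 0 < a) by (destruct (Rle_dec a 0); [nra|lra]).
  assert (Hmb : m * b <= b) by nra.
  assert (Hin : forall s, m * a <= s <= b -> interior I s).
  { intros s Hs. assert (Hp : 0 < Rmin d1 d2) by (apply Rmin_pos; apply cond_pos).
    exists (mkposreal _ Hp). intros y Hy. unfold disc in Hy; simpl in Hy.
    pose proof (Rmin_l d1 d2). pose proof (Rmin_r d1 d2). apply Rabs_def2 in Hy.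
    destruct (Rlt_dec y (m * a)).
    - apply Hd1. unfold disc. apply Rabs_def1; lra.
    - destruct (Rlt_dec b y).
      + apply Hd2. unfold disc. apply Rabs_def1; lra.
      + apply (hI (m * a) y b); auto; lra. }
  assert (Hder : forall s, m * a <= s <= b -> is_derive f s (f' s)).
  { intros s Hs. apply is_derive_Reals. apply hf'. apply Hin; auto. }
  set (L := c - m * a).
  assert (HL : L = m * (b - a) / 2) by (unfold L, c; field).
  assert (HLp : 0 < L) by (rewrite HL; apply Rdiv_lt_0_compat; nra).
  assert (HcL : m * b - c = L) by (unfold L, c; field).
  assert (Hcb : c <= b) by (unfold c; nra).
  set (A := rpow (Rabs (f' c)) q).
  assert (HA : 0 <= A) by apply rpow_ge0.
  assert (HBa : 0 <= rpow (Rabs (f' a)) q) by apply rpow_ge0.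
  assert (HBb : 0 <= rpow (Rabs (f' b)) q) by apply rpow_ge0.
  destruct (side f f' (m * a) c theta alpha q m A (rpow (Rabs (f' a)) q) ltac:(lra) htheta halpha hq
              (proj1 hm) HA HBa) as [VL [HVL HbL]].
  { intros s Hs. apply Hder. lra. }
  { intros s Hs. fold L.
    set (t := (s - m * a) / L).
    assert (Ht : 0 <= t <= 1).
    { unfold t. split. apply Rmult_le_pos; [lra|left; apply Rinv_0_lt_compat; lra].
      apply Rmult_le_reg_r with L; auto. unfold Rdiv. rewrite Rmult_assoc, Rinv_l; lra. }
    assert (Es : t * c + m * (1 - t) * a = s) by (unfold t, L; field; unfold L in HLp; lra).
    pose proof (hconv c a t ltac:(simpl; lra) ltac:(simpl; nra) Ht ltac:(simpl; rewrite Es; lra)) as H.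
    simpl in H. rewrite Es in H. exact H. }
  destruct (side (fun u => f (- u)) (fun u => - f' (- u)) (- (m * b)) (- c) theta alpha q m A (rpow (Rabs (f' b)) q)
              ltac:(lra) htheta halpha hq (proj1 hm) HA HBb) as [VR [HVR HbR]].
  { intros s Hs.
    pose proof (is_derive_comp f (fun u => - u) s (f' (- s)) (-1) (Hder (- s) ltac:(lra))) as H.
    eapply is_derive_eq'. apply H. auto_derive; auto.
    unfold scal; simpl; unfold mult; simpl. ring. }
  { intros u Hu. rewrite Rabs_Ropp.
    replace (- c - - (m * b)) with L by lra.
    set (t := (u - - (m * b)) / L).
    assert (Ht : 0 <= t <= 1).
    { unfold t. split. apply Rmult_le_pos; [lra|left; apply Rinv_0_lt_compat; lra].
      apply Rmult_le_reg_r with L; auto. unfold Rdiv. rewrite Rmult_assoc, Rinv_l; lra. }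
    assert (Es : t * c + m * (1 - t) * b = - u).
    { assert (tL : t * L = u + m * b) by (unfold t; field; lra).
      assert (t * (m * b - c) = t * L) by (rewrite HcL; auto). nra. }
    pose proof (hconv c b t ltac:(simpl; lra) ltac:(simpl; nra) Ht ltac:(simpl; rewrite Es; lra)) as H.
    simpl in H. rewrite Es in H. exact H. }
  assert (HJL : J_left theta c f (m * a) = / Gamma theta * VL).
  { unfold J_left. rewrite (improper_unique _ _ _ VL); auto. lra. }
  assert (HVR' : improper_int_is (fun s => Rpower (m * b - s) (theta - 1) * f s) c (m * b) VR).
  { apply improper_refl. cbv beta.
    assert (Efun : (fun u => Rpower (m * b - - u) (theta - 1) * f (- u)) =
                   (fun s => Rpower (s - - (m * b)) (theta - 1) * f (- s))).
    { apply functional_extensionality; intro u. f_equal. f_equal. ring. }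
    rewrite Efun. exact HVR. }
  assert (HJR : J_right theta c f (m * b) = / Gamma theta * VR).
  { unfold J_right. rewrite (improper_unique _ _ _ VR); auto. lra. }
  rewrite HJL, HJR.
  rewrite Gamma_succ by auto.
  destruct (Gamma_val theta htheta) as [HG0 _].
  rewrite (rpow_pos 2), (rpow_pos m), (rpow_pos (b - a)) by lra.
  replace (- c - - (m * b)) with L in HbR by lra.
  rewrite Ropp_involutive in HbR.
  replace (c - m * a) with L in HbL by (unfold L; ring).
  set (LT := Rpower L theta) in *.
  set (P2 := Rpower 2 (theta - 1)).
  assert (HLT : 0 < LT) by apply Rpower_gt0.
  assert (HP2 : 0 < P2) by apply Rpower_gt0.
  assert (HX : Rpower m theta * Rpower (b - a) theta = LT * (P2 * 2)).
  { rewrite Rpower_mult_distr by lra.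
    replace (P2 * 2) with (Rpower 2 theta).
    unfold LT. rewrite Rpower_mult_distr by lra. f_equal. rewrite HL. field.
    unfold P2. replace theta with ((theta - 1) + 1) at 1 by ring. rewrite Rpower_plus, Rpower_1 by lra. auto. }
  rewrite HX.
  replace (Rpower L (theta + 1)) with (LT * L) in HbL, HbR by (unfold LT; rewrite Rpower_plus, Rpower_1 by lra; auto).
  set (rho := rpow (1 / (alpha + theta + 1)) (1 / q)) in *.
  set (ra := rpow ((theta + 1) * A + alpha * m * rpow (Rabs (f' a)) q) (1 / q)) in *.
  set (rb := rpow ((theta + 1) * A + alpha * m * rpow (Rabs (f' b)) q) (1 / q)) in *.
  set (u := f c * (/ theta * LT) - VL) in *.
  set (v := f c * (/ theta * LT) - VR) in *.
  set (G0 := Gamma theta) in *.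
  set (K := theta / (LT * 2)).
  assert (HK : 0 < K) by (unfold K; apply Rdiv_lt_0_compat; lra).
  replace (f c - theta * G0 * P2 / (LT * (P2 * 2)) * (/ G0 * VL + / G0 * VR)) with (K * (u + v))
    by (unfold K, u, v; field; repeat split; lra).
  rewrite Rabs_mult, (Rabs_right K) by lra.
  assert (Huv : Rabs (u + v) <= LT * L / theta * / (theta + 1) * (rho * ra) + LT * L / theta * / (theta + 1) * (rho * rb)).
  { eapply Rle_trans. apply Rabs_triang. lra. }
  apply Rmult_le_compat_l with (r := K) in Huv; [|lra].
  eapply Rle_trans. apply Huv. right.
  unfold K. rewrite HL. field. repeat split; lra.
Qed.
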